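(* Let $\gamma = \lim_{n\to\infty}\left(1 + \frac{1}{2} + \cdots + \frac{1}{n} - \ln n\right)$ be Euler's constant. Then $$e^{\gamma} = \prod_{n=1}^{\infty} \left( \prod_{k=0}^{n} (k+1)^{(-1)^{k+1}\binom{n}{k}} \right)^{1/(n+1)} = \left(\frac{2}{1}\right)^{1/2}\left(\frac{2^2}{1\cdot 3}\right)^{1/3}\left(\frac{2^3\cdot 4}{1\cdot 3^3}\right)^{1/4}\left(\frac{2^4\cdot 4^4}{1\cdot 3^6\cdot 5}\right)^{1/5}\cdots,$$ where the infinite product converges, i.e. its $N$th partial product tends to $e^\gamma$ as $N\to\infty$. Equivalently, $$\gamma = \sum_{n=1}^{\infty} \frac{1}{n+1} \sum_{k=0}^{n} (-1)^{k+1}\binom{n}{k} \ln(k+1).$$ *)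

(* Defs.v *)
From Stdlib Require Import Reals.
From Coquelicot Require Import Coquelicot.
Open Scope R_scope.

Fixpoint harmonic (n : nat) : R :=
  match n with
  | O => 0
  | S m => harmonic m + / INR (S m)
  end.

Definition euler_gamma : R :=
  real (Lim_seq (fun n => harmonic n - ln (INR n))).

Definition euler_factor (n : nat) : R :=
  Rpower (prod_f_R0 (fun k => Rpower (INR k + 1) ((-1) ^ (k + 1) * Binomial.C n k)) n)
         (/ (INR n + 1)).

Fixpoint euler_partial_prod (N : nat) : R :=
  match N with
  | O => 1
  | S M => euler_partial_prod M * euler_factor (S M)
  end.

Definition euler_term (n : nat) : R :=
  / (INR n + 1) * sum_f_R0 (fun k => (-1) ^ (k + 1) * Binomial.C n k * ln (INR k + 1)) n.

Fixpoint euler_partial_sum (N : nat) : R :=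
  match N with
  | O => 0
  | S M => euler_partial_sum M + euler_term (S M)
  end.

(* Main.v *)
Require Import Defs.
From Stdlib Require Import Reals Lra Lia.
From Coquelicot Require Import Coquelicot.
Open Scope R_scope.

Definition A (n : nat) (g : nat -> R) : R :=
  sum_f_R0 (fun k => (-1)^k * Binomial.C n k * g k) n.

Lemma A_ext n f g : (forall k, (k <= n)%nat -> f k = g k) -> A n f = A n g.
Proof. intros H; unfold A; apply sum_eq; intros i Hi; rewrite H; auto. Qed.

Lemma A_step n g : A (S n) g = A n g - A n (fun k => g (S k)).
Proof.
  destruct n as [|m].
  - unfold A; simpl. unfold Binomial.C; simpl. field.
  - unfold A.
    rewrite (decomp_sum _ (S (S m))) by lia.
    rewrite (decomp_sum (fun k => (-1)^k * Binomial.C (S m) k * g k) (S m)) by lia.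
    simpl Init.Nat.pred.
    rewrite tech5.
    rewrite (sum_eq (fun i => (-1) ^ S i * Binomial.C (S (S m)) (S i) * g (S i))
       (fun i => (-((-1) ^ i * Binomial.C (S m) i * g (S i))) + ((-1) ^ S i * Binomial.C (S m) (S i) * g (S i))) m).
    2:{ intros i Hi. rewrite <- pascal by lia. simpl. ring. }
    rewrite plus_sum.
    rewrite (tech5 (fun k => (-1) ^ k * Binomial.C (S m) k * g (S k)) m).
    replace (sum_f_R0 (fun i : nat => - ((-1) ^ i * Binomial.C (S m) i * g (S i))) m)
      with (-1 * sum_f_R0 (fun i : nat => ((-1) ^ i * Binomial.C (S m) i * g (S i))) m).
    2:{ rewrite scal_sum; apply sum_eq; intros; ring. }
    rewrite !C_n_0, !C_n_n.
    simpl. ring.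
Qed.

Lemma A_lin n a b f g : A n (fun k => a * f k + b * g k) = a * A n f + b * A n g.
Proof.
  unfold A. rewrite (scal_sum _ n a), (scal_sum _ n b), <- plus_sum.
  apply sum_eq; intros; ring.
Qed.

Lemma A_const n c : A (S n) (fun _ => c) = 0.
Proof. rewrite A_step. ring. Qed.

Fixpoint P (y : R) (n : nat) : R :=
  match n with O => y | S m => P y m * (y + INR (S m)) end.

Lemma P_pos y n : 0 < y -> 0 < P y n.
Proof.
  intros Hy; induction n; [simpl; auto|].
  change (P y (S n)) with (P y n * (y + INR (S n))).
  apply Rmult_lt_0_compat; auto. pose proof (pos_INR (S n)). lra.
Qed.

Lemma P_shift y n : y * P (y + 1) n = P y (S n).
Proof.
  induction n.
  - simpl. ring.
  - change (P (y+1) (S n)) with (P (y+1) n * (y + 1 + INR (S n))).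
    change (P y (S (S n))) with (P y (S n) * (y + INR (S (S n)))).
    rewrite <- IHn. rewrite (S_INR (S n)). ring.
Qed.

Lemma PF n y : 0 < y -> A n (fun k => / (y + INR k)) = INR (Factorial.fact n) / P y n.
Proof.
  revert y; induction n; intros y Hy.
  - unfold A; simpl. unfold Binomial.C; simpl. field. lra.
  - rewrite A_step.
    rewrite (A_ext n (fun k => / (y + INR (S k))) (fun k => / ((y+1) + INR k))).
    2:{ intros; rewrite S_INR; f_equal; ring. }
    rewrite IHn by lra. rewrite (IHn (y+1)) by lra.
    rewrite fact_simpl, mult_INR.
    pose proof (P_pos y n Hy). pose proof (P_pos (y+1) n ltac:(lra)).
    pose proof (pos_INR n).
    assert (E : P y n = y * P (y+1) n / (y + INR n + 1)).
    { rewrite P_shift. change (P y (S n)) with (P y n * (y + INR (S n))). rewrite S_INR. field. lra. }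
    rewrite <- P_shift. rewrite E. rewrite S_INR. field. repeat split; lra.
Qed.

Lemma RInt_sumf (c : nat -> R) (F : nat -> R -> R) (v : nat -> R) a b N :
  (forall k, is_RInt (F k) a b (v k)) ->
  is_RInt (fun t => sum_f_R0 (fun k => c k * F k t) N) a b (sum_f_R0 (fun k => c k * v k) N).
Proof.
  intros H. induction N.
  - simpl. apply (is_RInt_scal (F 0%nat) a b (c 0%nat) (v 0%nat)). apply H.
  - simpl. apply (is_RInt_plus _ (fun t => c (S N) * F (S N) t)); auto.
    apply (is_RInt_scal (F (S N)) a b (c (S N)) (v (S N))). apply H.
Qed.

Lemma FTC_k p k : 0 < p ->
  is_RInt (fun t => INR k / (p + INR k * t)) 0 1 (ln (p + INR k) - ln p).
Proof.
  intros Hp. pose proof (pos_INR k).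
  replace (ln (p + INR k) - ln p) with (minus ((fun t => ln (p + INR k * t)) 1) ((fun t => ln (p + INR k * t)) 0)).
  2:{ unfold minus, plus, opp; simpl. rewrite Rmult_1_r, Rmult_0_r, Rplus_0_r. ring. }
  apply (is_RInt_derive (fun t => ln (p + INR k * t))).
  - intros x Hx. rewrite Rmin_left, Rmax_right in Hx by lra.
    auto_derive. nra. field. nra.
  - intros x Hx. rewrite Rmin_left, Rmax_right in Hx by lra.
    apply (ex_derive_continuous (fun t => INR k / (p + INR k * t))). auto_derive. nra.
Qed.

Definition D (n : nat) (p : R) : R := A n (fun k => ln (p + INR k)).
Definition W (p : R) (m : nat) (t : R) : R := INR (Factorial.fact m) * (p / t) / P (p / t) m.
Definition g (p : R) (n : nat) (t : R) : R := A n (fun k => INR k / (p + INR k * t)).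

Lemma g_is_RInt p m : 0 < p -> is_RInt (g p (S m)) 0 1 (D (S m) p).
Proof.
  intros Hp.
  assert (H := RInt_sumf (fun k => (-1)^k * Binomial.C (S m) k)
     (fun k t => INR k / (p + INR k * t)) (fun k => ln (p + INR k) - ln p) 0 1 (S m)
     (fun k => FTC_k p k Hp)).
  replace (D (S m) p) with (A (S m) (fun k => ln (p + INR k) - ln p)).
  2:{ rewrite (A_ext _ _ (fun k => 1 * ln (p + INR k) + (- ln p) * (fun _ => 1) k)).
      2:{ intros; simpl; ring. }
      rewrite A_lin, A_const. unfold D. ring. }
  unfold g, A. exact H.
Qed.

Lemma g_eq p m t : 0 < p -> 0 < t ->
  g p (S m) t = -(INR (S m) / p) * (W p m t - W p (S m) t).
Proof.
  intros Hp Ht. set (y := p / t).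
  assert (Hy : 0 < y) by (unfold y; apply Rdiv_lt_0_compat; auto).
  unfold g.
  rewrite (A_ext _ _ (fun k => (/ t) * (fun _ => 1) k + (- (y / t)) * (fun k => / (y + INR k)) k)).
  2:{ intros k _. pose proof (pos_INR k). unfold y. field. split; [lra|nra]. }
  rewrite A_lin, A_const, PF by auto.
  unfold W. fold y.
  change (P y (S m)) with (P y m * (y + INR (S m))).
  rewrite fact_simpl, mult_INR.
  pose proof (P_pos y m Hy). pose proof (pos_INR (S m)).
  replace (y / t) with (y * (y / p)) by (unfold y; field; lra).
  field. repeat split; lra.
Qed.

Lemma W_diff_RInt p m : 0 < p ->
  is_RInt (fun t => W p m t - W p (S m) t) 0 1 (- (p / INR (S m)) * D (S m) p).
Proof.
  intros Hp. pose proof (lt_0_INR (S m) ltac:(lia)).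
  apply (is_RInt_ext (fun t => - (p / INR (S m)) * g p (S m) t)).
  - intros x Hx. rewrite Rmin_left, Rmax_right in Hx by lra.
    match goal with |- ?a = ?b => change (@eq R a b) end. rewrite g_eq by lra. field. repeat split; lra.
  - apply (is_RInt_scal (g p (S m)) 0 1 (- (p / INR (S m)))). apply g_is_RInt; auto.
Qed.

Lemma RInt_one : is_RInt (fun _ => 1) 0 1 1.
Proof.
  assert (H := is_RInt_const (V:=R_NormedModule) 0 1 1).
  unfold scal in H; simpl in H; unfold mult in H; simpl in H.
  replace ((1-0)*1) with 1 in H by ring. exact H.
Qed.

Lemma W_ex p m : 0 < p -> ex_RInt (W p m) 0 1.
Proof.
  intros Hp. induction m.
  - exists 1. apply (is_RInt_ext (fun _ => 1)).
    + intros x Hx. rewrite Rmin_left, Rmax_right in Hx by lra.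
      unfold W. simpl. field. repeat split; lra.
    + apply RInt_one.
  - destruct IHm as [l Hl].
    eexists. apply (is_RInt_ext (fun t => W p m t - (W p m t - W p (S m) t))).
    + intros. match goal with |- ?a = ?b => change (@eq R a b) end. ring.
    + apply (is_RInt_minus (W p m) (fun t => W p m t - W p (S m) t)); eauto.
      apply W_diff_RInt; auto.
Qed.

Definition J (p : R) (m : nat) : R := RInt (W p m) 0 1.

Lemma D_J p m : 0 < p -> D (S m) p = - (INR (S m) / p) * (J p m - J p (S m)).
Proof.
  intros Hp. pose proof (lt_0_INR (S m) ltac:(lia)).
  assert (H1 := W_diff_RInt p m Hp).
  assert (H2 : is_RInt (fun t => W p m t - W p (S m) t) 0 1 (J p m - J p (S m))).
  { unfold J. apply (is_RInt_minus (W p m) (W p (S m))) ; [exact (RInt_correct _ _ _ (W_ex p m Hp)) | exact (RInt_correct _ _ _ (W_ex p (S m) Hp))]. }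
  apply (is_RInt_unique (V:=R_CompleteNormedModule)) in H1. apply (is_RInt_unique (V:=R_CompleteNormedModule)) in H2. rewrite H1 in H2.
  rewrite <- H2. field. lra.
Qed.

Lemma J0 p : 0 < p -> J p 0 = 1.
Proof.
  intros Hp. unfold J. apply is_RInt_unique.
  apply (is_RInt_ext (fun _ => 1)).
  + intros x Hx. rewrite Rmin_left, Rmax_right in Hx by lra.
    unfold W. simpl. field. repeat split; lra.
  + apply RInt_one.
Qed.

Lemma RInt_c c : @is_RInt R_NormedModule (fun _ => c) 0 1 c.
Proof.
  assert (H := is_RInt_const (V:=R_NormedModule) 0 1 c).
  unfold scal in H; simpl in H; unfold mult in H; simpl in H.
  assert (E : (1 - 0) * c = c) by ring. rewrite E in H. exact H.
Qed.

Lemma P_ge y m : 1 <= y -> y * INR (Factorial.fact (S m)) <= P y m.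
Proof.
  intros Hy. induction m.
  - simpl. lra.
  - change (P y (S m)) with (P y m * (y + INR (S m))).
    rewrite fact_simpl, mult_INR.
    pose proof (pos_INR (Factorial.fact (S m))).
    rewrite !S_INR in *. pose proof (pos_INR m).
    assert (0 <= y * INR (Factorial.fact (S m))) by nra.
    nra.
Qed.

Lemma W_bounds p m t : 1 <= p -> 0 < t < 1 ->
  0 <= W p m t /\ W p (S m) t <= W p m t /\ W p m t <= / (INR m + 1).
Proof.
  intros Hp Ht. set (y := p / t).
  assert (Hy : 1 < y).
  { unfold y. apply (Rmult_lt_reg_r t); [lra|]. field_simplify; lra. }
  pose proof (P_pos y m ltac:(lra)).
  pose proof (pos_INR m). pose proof (lt_0_INR (Factorial.fact m) (Factorial.lt_O_fact m)).
  unfold W; fold y.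
  change (P y (S m)) with (P y m * (y + INR (S m))).
  rewrite fact_simpl, mult_INR, S_INR.
  assert (Hw : 0 <= INR (Factorial.fact m) * y / P y m).
  { apply Rmult_le_pos; [nra|]. left; apply Rinv_0_lt_compat; auto. }
  split; [exact Hw|split].
  - replace ((INR m + 1) * INR (Factorial.fact m) * y / (P y m * (y + (INR m + 1))))
      with ((INR (Factorial.fact m) * y / P y m) * ((INR m + 1) / (y + (INR m + 1)))) by (field; lra).
    assert ((INR m + 1) / (y + (INR m + 1)) <= 1).
    { apply (Rmult_le_reg_r (y + (INR m + 1))); [lra|]. field_simplify; lra. }
    assert (0 <= (INR m + 1) / (y + (INR m + 1))).
    { apply Rmult_le_pos; [lra|]. left; apply Rinv_0_lt_compat; lra. }
    nra.
  - pose proof (P_ge y m ltac:(lra)). rewrite fact_simpl, mult_INR, S_INR in H2.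
    unfold Rdiv. apply Rle_trans with (INR (Factorial.fact m) * y * / (y * ((INR m + 1) * INR (Factorial.fact m)))).
    + apply Rmult_le_compat_l; [nra|]. apply Rinv_le_contravar; [apply Rmult_lt_0_compat; [lra | apply Rmult_lt_0_compat; lra] | lra].
    + right. field. repeat split; lra.
Qed.

Lemma J_bounds p m : 1 <= p ->
  0 <= J p m /\ J p (S m) <= J p m /\ J p m <= / (INR m + 1).
Proof.
  intros Hp.
  assert (E : forall k, is_RInt (W p k) 0 1 (J p k)).
  { intros k. exact (RInt_correct _ _ _ (W_ex p k ltac:(lra))). }
  split; [|split].
  - apply (is_RInt_le (fun _ => 0) (W p m) 0 1); [lra|apply RInt_c|apply E|].
    intros; apply W_bounds; auto.
  - apply (is_RInt_le (W p (S m)) (W p m) 0 1); [lra|apply E|apply E|].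
    intros; apply W_bounds; auto.
  - apply (is_RInt_le (W p m) (fun _ => / (INR m + 1)) 0 1); [lra|apply E|apply RInt_c|].
    intros; apply W_bounds; auto.
Qed.

Lemma D0 p : D 0 p = ln p.
Proof. unfold D, A; simpl. unfold Binomial.C; simpl. replace (p + 0) with p by ring. field. Qed.

Lemma D_shift n p : D (S n) p = D n p - D n (p + 1).
Proof.
  unfold D. rewrite A_step. f_equal. apply A_ext; intros. rewrite S_INR. f_equal. ring.
Qed.

Definition Phi (N : nat) (p : R) : R := sum_f_R0 (fun n => D n p / (INR n + 1)) N.

Lemma Phi_S N p : Phi (S N) p = Phi N p + D (S N) p / (INR (S N) + 1).
Proof. reflexivity. Qed.

Lemma Phi_step N p : 1 <= p -> Phi N (p + 1) - Phi N p = (1 - J p (S N)) / p.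
Proof.
  intros Hp. induction N.
  - unfold Phi; simpl.
    assert (D 0 (p+1) = D 0 p - D 1 p) by (rewrite D_shift; ring).
    rewrite H, D_J by lra. rewrite J0 by lra. simpl. field. lra.
  - rewrite !Phi_S.
    replace (Phi N (p + 1) + D (S N) (p + 1) / (INR (S N) + 1) - (Phi N p + D (S N) p / (INR (S N) + 1)))
      with ((Phi N (p + 1) - Phi N p) + (D (S N) (p + 1) - D (S N) p) / (INR (S N) + 1)) by (field; pose proof (pos_INR (S N)); lra).
    rewrite IHN.
    assert (D (S N) (p+1) - D (S N) p = - D (S (S N)) p) by (rewrite (D_shift (S N)); ring).
    rewrite H. rewrite (D_J p (S N)) by lra. rewrite (S_INR (S N)).
    pose proof (pos_INR (S N)). field. lra.
Qed.

Lemma Rho_bounds N p : 1 <= p -> - (1 - J p N) / p <= Phi N p - ln p <= 0.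
Proof.
  intros Hp. induction N.
  - unfold Phi; simpl. rewrite D0, J0 by lra. split; [|lra]. unfold Rdiv. lra.
  - replace (Phi (S N) p - ln p) with ((Phi N p - ln p) + D (S N) p / (INR (S N) + 1)) by (unfold Phi; simpl; ring).
    rewrite D_J by lra.
    destruct (J_bounds p N Hp) as [Ja [Jb Jc]].
    set (a := J p N) in *. set (b := J p (S N)) in *.
    pose proof (pos_INR (S N)).
    set (s := INR (S N)) in *.
    replace (- (s / p) * (a - b) / (s + 1)) with (- ((s / (s+1)) * ((a - b) / p))) by (field; lra).
    assert (0 <= s / (s + 1) <= 1).
    { split. apply Rmult_le_pos; [lra|left; apply Rinv_0_lt_compat; lra].
      apply (Rmult_le_reg_r (s+1)); [lra|]. field_simplify; lra. }
    assert (0 <= (a - b) / p) by (apply Rmult_le_pos; [lra|left; apply Rinv_0_lt_compat; lra]).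
    assert (- (1 - b) / p = - (1 - a) / p - (a - b) / p) by (field; lra).
    rewrite H2. nra.
Qed.

Fixpoint Esum (N q : nat) : R :=
  match q with O => 0 | S r => Esum N r + J (INR (S r)) (S N) / INR (S r) end.

Lemma Phi_tel N q : Phi N (INR q + 1) - Phi N 1 = harmonic q - Esum N q.
Proof.
  induction q.
  - simpl. replace (0 + 1) with 1 by ring. ring.
  - change (harmonic (S q)) with (harmonic q + / INR (S q)).
    change (Esum N (S q)) with (Esum N q + J (INR (S q)) (S N) / INR (S q)).
    pose proof (pos_INR q).
    rewrite ?S_INR.
    assert (H1 := Phi_step N (INR q + 1) ltac:(lra)).
    rewrite ?S_INR. 
    replace (Phi N (INR q + 1 + 1) - Phi N 1) with ((Phi N (INR q + 1 + 1) - Phi N (INR q + 1)) + (Phi N (INR q + 1) - Phi N 1)) by ring.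
    rewrite H1, IHq. field. lra.
Qed.

Lemma Esum_bounds N q : 0 <= Esum N q <= INR q / (INR N + 2).
Proof.
  induction q.
  - simpl. unfold Rdiv. lra.
  - change (Esum N (S q)) with (Esum N q + J (INR (S q)) (S N) / INR (S q)).
    pose proof (pos_INR q). pose proof (pos_INR N).
    rewrite !S_INR.
    destruct (J_bounds (INR q + 1) (S N) ltac:(lra)) as [Ja [_ Jc]].
    rewrite S_INR in Jc.
    assert (J (INR q + 1) (S N) / (INR q + 1) <= / (INR N + 2)).
    { unfold Rdiv.
      apply Rle_trans with (J (INR q + 1) (S N) * 1).
      - apply Rmult_le_compat_l; auto. rewrite <- Rinv_1. apply Rinv_le_contravar; lra.
      - replace (INR N + 2) with (INR N + 1 + 1) by ring. lra. }
    assert (0 <= J (INR q + 1) (S N) / (INR q + 1)).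
    { apply Rmult_le_pos; auto. left; apply Rinv_0_lt_compat; lra. }
    replace ((INR q + 1) / (INR N + 2)) with (INR q / (INR N + 2) + / (INR N + 2)) by (field; lra).
    assert (0 <= INR q / (INR N + 2)) by (apply Rmult_le_pos; [lra|left; apply Rinv_0_lt_compat; lra]).
    lra.
Qed.

Lemma term_D n : euler_term n = - (D n 1 / (INR n + 1)).
Proof.
  unfold euler_term, D, A.
  assert (E : sum_f_R0 (fun k => (-1) ^ (k + 1) * Binomial.C n k * ln (INR k + 1)) n
            = -1 * sum_f_R0 (fun k => (-1) ^ k * Binomial.C n k * ln (1 + INR k)) n).
  { rewrite scal_sum. apply sum_eq; intros. rewrite pow_add, (Rplus_comm 1). ring. }
  rewrite E. unfold Rdiv. ring.
Qed.

Lemma sum_Phi N : euler_partial_sum N = - (Phi N 1 - ln 1).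
Proof.
  induction N.
  - simpl. unfold Phi; simpl. rewrite D0. field.
  - simpl euler_partial_sum. rewrite IHN, Phi_S, term_D. ring.
Qed.

Lemma key N q : Rabs (euler_partial_sum N - (harmonic q - ln (INR q + 1))) <= INR q / (INR N + 2) + / (INR q + 1).
Proof.
  pose proof (pos_INR q).
  rewrite sum_Phi, ln_1.
  assert (H1 := Phi_tel N q).
  assert (H2 := Rho_bounds N (INR q + 1) ltac:(lra)).
  destruct (J_bounds (INR q + 1) N ltac:(lra)) as [Ja [_ Jc]].
  destruct (Esum_bounds N q) as [E1 E2].
  assert (H3 : - / (INR q + 1) <= - (1 - J (INR q + 1) N) / (INR q + 1)).
  { unfold Rdiv. rewrite <- Ropp_mult_distr_l. apply Ropp_le_contravar.
    rewrite <- (Rmult_1_l (/ (INR q + 1))) at 2. apply Rmult_le_compat_r; [left; apply Rinv_0_lt_compat; lra | lra]. }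
  apply Rabs_le. split; lra.
Qed.

Lemma ln_le_sub1 z : 0 < z -> ln z <= z - 1.
Proof.
  intros Hz. destruct (Req_dec z 1) as [->|Hn].
  - rewrite ln_1. lra.
  - assert (ln z <> 0). { intro H0. apply Hn. rewrite <- (exp_ln z) by auto. rewrite H0. apply exp_0. }
    pose proof (exp_ineq1 (ln z) H). rewrite exp_ln in H0 by auto. lra.
Qed.

Lemma ln_diff_bounds a : 0 < a -> / (a + 1) <= ln (a + 1) - ln a <= / a.
Proof.
  intros Ha. split.
  - assert (H := ln_le_sub1 (a * / (a + 1)) ltac:(apply Rmult_lt_0_compat; [lra|apply Rinv_0_lt_compat; lra])).
    rewrite ln_mult, ln_Rinv in H by (try apply Rinv_0_lt_compat; lra).
    replace (a * / (a + 1) - 1) with (- / (a + 1)) in H by (field; lra). lra.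
  - assert (H := ln_le_sub1 ((a + 1) * / a) ltac:(apply Rmult_lt_0_compat; [lra|apply Rinv_0_lt_compat; lra])).
    rewrite ln_mult, ln_Rinv in H by (try apply Rinv_0_lt_compat; lra).
    replace ((a + 1) * / a - 1) with (/ a) in H by (field; lra). lra.
Qed.

Definition dseq (n : nat) : R := harmonic n - ln (INR n).
Definition cseq (n : nat) : R := harmonic n - ln (INR n + 1).

Lemma cseq_nonneg n : 0 <= cseq n.
Proof.
  induction n.
  - unfold cseq. simpl. replace (0 + 1) with 1 by ring. rewrite ln_1. lra.
  - unfold cseq in *. change (harmonic (S n)) with (harmonic n + / INR (S n)).
    rewrite S_INR. pose proof (pos_INR n).
    pose proof (ln_diff_bounds (INR n + 1) ltac:(lra)). lra.
Qed.

Lemma dseq_S n : dseq (S n) = cseq n + / (INR n + 1).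
Proof.
  unfold dseq, cseq. change (harmonic (S n)) with (harmonic n + / INR (S n)). rewrite S_INR. ring.
Qed.

Lemma dseq_lim : exists L : R, is_lim_seq dseq L.
Proof.
  assert (Hex : ex_finite_lim_seq (fun n => dseq (S n))).
  { apply (ex_finite_lim_seq_decr _ 0).
    - intros n. rewrite !dseq_S. unfold cseq.
      change (harmonic (S n)) with (harmonic n + / INR (S n)). rewrite !S_INR.
      pose proof (pos_INR n).
      pose proof (ln_diff_bounds (INR n + 1) ltac:(lra)). lra.
    - intros n. rewrite dseq_S. pose proof (cseq_nonneg n). pose proof (pos_INR n).
      assert (0 < / (INR n + 1)) by (apply Rinv_0_lt_compat; lra). lra. }
  destruct Hex as [L HL]. exists L. apply is_lim_seq_incr_1. exact HL.
Qed.

Lemma inv_lim : is_lim_seq (fun n => / INR (S n)) 0.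
Proof.
  assert (H : is_lim_seq (fun n => INR (S n)) p_infty).
  { apply (is_lim_seq_incr_1 INR p_infty). apply is_lim_seq_INR. }
  apply is_lim_seq_inv in H; [|discriminate]. exact H.
Qed.

Lemma cseq_lim (L : R) : is_lim_seq dseq L -> is_lim_seq cseq L.
Proof.
  intros HL. apply is_lim_seq_incr_1 in HL.
  assert (H := is_lim_seq_minus' _ _ _ _ HL inv_lim).
  replace (L - 0) with L in H by ring.
  refine (is_lim_seq_ext _ _ _ _ H). intros n. cbv beta. rewrite dseq_S, S_INR. ring.
Qed.

Lemma sum_lim (L : R) : is_lim_seq dseq L -> is_lim_seq euler_partial_sum L.
Proof.
  intros HL. apply cseq_lim in HL.
  apply is_lim_seq_spec. intros eps.
  assert (He3 : 0 < eps / 3) by (destruct eps; simpl; lra).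
  apply is_lim_seq_spec in HL. destruct (HL (mkposreal _ He3)) as [N1 HN1].
  assert (Hi := inv_lim). apply is_lim_seq_spec in Hi.
  destruct (Hi (mkposreal _ He3)) as [N2 HN2].
  set (q := max N1 N2).
  assert (Hq1 : Rabs (cseq q - L) < eps / 3) by (apply HN1; unfold q; lia).
  assert (Hq2 : / (INR q + 1) < eps / 3).
  { assert (H := HN2 q ltac:(unfold q; lia)). cbv beta in H. rewrite S_INR in H.
    rewrite Rminus_0_r, Rabs_pos_eq in H; auto. left; apply Rinv_0_lt_compat. pose proof (pos_INR q); lra. }
  assert (Hs := is_lim_seq_scal_l _ (INR q) _ inv_lim).
  apply is_lim_seq_spec in Hs. destruct (Hs (mkposreal _ He3)) as [N3 HN3].
  exists N3. intros N HN.
  assert (H : Rabs (INR q * / INR (S N) - INR q * 0) < eps / 3) by exact (HN3 N HN).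
  rewrite Rmult_0_r, Rminus_0_r in H.
  assert (H' : INR q / (INR N + 2) <= INR q * / INR (S N)).
  { rewrite S_INR. pose proof (pos_INR q). pose proof (pos_INR N). unfold Rdiv.
    apply Rmult_le_compat_l; auto. apply Rinv_le_contravar; lra. }
  assert (H'' : INR q * / INR (S N) <= Rabs (INR q * / INR (S N))) by apply Rle_abs.
  assert (Hk := key N q).
  unfold cseq in Hq1.
  replace (euler_partial_sum N - L) with ((euler_partial_sum N - (harmonic q - ln (INR q + 1))) + (harmonic q - ln (INR q + 1) - L)) by ring.
  eapply Rle_lt_trans. apply Rabs_triang. lra.
Qed.

Lemma ln_prod f n : (forall k, 0 < f k) -> 0 < prod_f_R0 f n /\ ln (prod_f_R0 f n) = sum_f_R0 (fun k => ln (f k)) n.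
Proof.
  intros Hf. induction n.
  - simpl. auto.
  - simpl. destruct IHn as [H1 H2]. split.
    + apply Rmult_lt_0_compat; auto.
    + rewrite ln_mult by auto. rewrite H2. reflexivity.
Qed.

Lemma factor_exp n : euler_factor n = exp (euler_term n).
Proof.
  unfold euler_factor, euler_term, Rpower at 1. f_equal. f_equal.
  rewrite (proj2 (ln_prod (fun k => Rpower (INR k + 1) ((-1) ^ (k + 1) * Binomial.C n k)) n (fun k => exp_pos _))).
  apply sum_eq. intros. unfold Rpower. rewrite ln_exp. reflexivity.
Qed.

Lemma prod_exp N : euler_partial_prod N = exp (euler_partial_sum N).
Proof.
  induction N.
  - simpl. rewrite exp_0. reflexivity.
  - simpl. rewrite IHN, factor_exp, exp_plus. reflexivity.
Qed.

Theorem mainTheorem1 :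
  ex_finite_lim_seq (fun n => harmonic n - ln (INR n)) /\
  is_lim_seq euler_partial_prod (exp euler_gamma) /\
  is_lim_seq euler_partial_sum euler_gamma.
Proof.
  destruct dseq_lim as [L HL].
  assert (Hg : euler_gamma = L).
  { unfold euler_gamma. change (fun n => harmonic n - ln (INR n)) with dseq.
    rewrite (is_lim_seq_unique _ _ HL). reflexivity. }
  assert (HS := sum_lim L HL).
  split; [|split].
  - exists L. exact HL.
  - rewrite Hg. refine (is_lim_seq_ext _ _ _ (fun N => eq_sym (prod_exp N)) _).
    apply (is_lim_seq_continuous exp euler_partial_sum L).
    + apply derivable_continuous_pt, derivable_pt_exp.
    + exact HS.
  - rewrite Hg. exact HS.
Qed.
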